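(* Let $D$ be a Euclidean domain with fraction field $K$, and let $R(D)$ be the subring of $K$ generated by the set $\{1/d \mid d \in D\setminus\{0\}\}$. Suppose $D$ is not Egyptian. Then $R(D)$ is a discrete valuation ring (of rank one, not a field), and the set consisting of the units of $D$ together with $0$ is a field.
   Context: A Euclidean function on an integral domain $D$ is a function $f: D\setminus\{0\} \to \mathbb{Z}$ such that for all nonzero $a,b \in D$: (1) $f(ab) \geq f(a)$, and (2) there exist $q,r \in D$ with $b = aq + r$ and either $r=0$ or $f(r) < f(a)$. A Euclidean domain is an integral domain admitting a Euclidean function. An element of $K$ is called $D$-Egyptian if it is a sum of reciprocals of distinct nonzero elements of $D$. The domain $D$ is called Egyptian if every nonzero element of $K$ is $D$-Egyptian. *)

(* Defs.v *)
From HB Require Import structures.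
From mathcomp Require Import all_boot all_order all_algebra fraction.
Set Implicit Arguments. Unset Strict Implicit. Unset Printing Implicit Defensive.
Import Order.TTheory GRing.Theory Num.Theory.
Local Open Scope ring_scope.
Notation tofrac := (@FracField.tofrac _).
Local Notation "x %:F" := (tofrac x) (format "x %:F").


(* f : D -> int is a Euclidean function (its values at 0 are irrelevant). *)
Definition euclidean_function (D : idomainType) (f : D -> int) : Prop :=
  forall a b : D, a != 0 -> b != 0 ->
    f a <= f (a * b) /\
    exists q r : D, b = a * q + r /\ (r = 0 \/ f r < f a).

Definition is_euclidean (D : idomainType) : Prop :=
  exists f : D -> int, euclidean_function f.

Definition D_egyptian (D : idomainType) (x : {fraction D}) : Prop :=
  exists s : seq D, uniq s /\ all (fun d => d != 0) s /\
    x = \sum_(d <- s) (d%:F)^-1.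

Definition egyptian (D : idomainType) : Prop :=
  forall x : {fraction D}, x != 0 -> D_egyptian x.

Definition RD (D : idomainType) (x : {fraction D}) : Prop :=
  forall S : {pred {fraction D}}, subring_closed S ->
    (forall d : D, d != 0 -> (d%:F)^-1 \in S) -> x \in S.

Definition discrete_valuation (K : fieldType) (v : K -> int) : Prop :=
  [/\ forall x y : K, x != 0 -> y != 0 -> v (x * y) = v x + v y,
      forall x y : K, x != 0 -> y != 0 -> x + y != 0 ->
        Num.min (v x) (v y) <= v (x + y)
    & forall n : int, exists2 x : K, x != 0 & v x = n].

Definition is_DVR_in (K : fieldType) (R : K -> Prop) : Prop :=
  exists v : K -> int, discrete_valuation v /\
    forall x : K, R x <-> (x = 0 \/ 0 <= v x).

Definition units0 (D : idomainType) : {pred D} :=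
  fun x => (x \is a GRing.unit) || (x == 0).

(* Main.v *)
Require Import Defs.
From HB Require Import structures.
From mathcomp Require Import all_boot all_order all_algebra fraction zify ring lra.
From Stdlib Require Import Classical ClassicalEpsilon.
Import Order.TTheory GRing.Theory Num.Theory.
Local Open Scope ring_scope.
Set Implicit Arguments. Unset Strict Implicit. Unset Printing Implicit Defensive.
Local Notation tofrac := (@FracField.tofrac _).
Local Notation "x %:F" := (tofrac x) (format "x %:F").

Lemma fracE (D : idomainType) (x : {fraction D}) :
  exists a b : D, b != 0 /\ x = a%:F / b%:F.
Proof.
elim/quotW: x => r.
exists (\n_r), (\d_r); split; first exact: denom_ratioP.
unlock FracField.tofrac.
rewrite -[RHS]/(FracField.mul (\pi_({fraction D})%qT (Ratio \n_r 1)) (FracField.inv (\pi_({fraction D})%qT (Ratio \d_r 1)))).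
rewrite -FracField.pi_inv -FracField.pi_mul /FracField.mulf /FracField.invf /=.
have dn := denom_ratioP r.
rewrite !(numer_Ratio, denom_Ratio) ?oner_neq0 // mulr1 mul1r ?(numer_Ratio, denom_Ratio) // ?Ratio_numden //.
Qed.

Section Basics.
Variable D : idomainType.
Local Notation K := {fraction D}.

Definition uf (a : D) : K := (a%:F)^-1.

Definition S (x : K) : Prop :=
  exists s : seq D, all (fun a => a != 0) s /\ x = \sum_(a <- s) uf a.

Lemma tofrac_neq0 (a : D) : a != 0 -> a%:F != 0.
Proof. by rewrite tofrac_eq0. Qed.

Lemma S0 : S 0.
Proof. by exists [::]; rewrite big_nil. Qed.

Lemma Suf a : a != 0 -> S (uf a).
Proof. by move=> a0; exists [:: a]; rewrite /= a0 big_seq1. Qed.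

Lemma S1 : S 1.
Proof. by have := Suf (oner_neq0 D); rewrite /uf tofrac1 invr1. Qed.

Lemma SD x y : S x -> S y -> S (x + y).
Proof.
move=> [s [hs ->]] [t [ht ->]]; exists (s ++ t); split.
  by rewrite all_cat hs ht.
by rewrite big_cat.
Qed.

Lemma SN x : S x -> S (- x).
Proof.
move=> [s [hs ->]]; exists (map -%R s); split.
  by rewrite all_map; apply: sub_all hs => a /=; rewrite oppr_eq0.
rewrite big_map -sumrN; apply: eq_bigr => a _.
by rewrite /uf tofracN invrN.
Qed.

Lemma SB x y : S x -> S y -> S (x - y).
Proof. by move=> hx hy; apply: SD hx (SN hy). Qed.

Lemma ufM a b : uf (a * b) = uf a * uf b.
Proof. by rewrite /uf tofracM invfM. Qed.

Lemma SM x y : S x -> S y -> S (x * y).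
Proof.
move=> [s [hs ->]] [t [ht ->]].
elim: s hs => [|a s IH] /=.
  by move=> _; rewrite big_nil mul0r; exact: S0.
move=> /andP[a0 hs]; rewrite big_cons mulrDl; apply: SD (IH hs).
rewrite mulr_sumr; exists (map ( *%R a) t); split.
  by rewrite all_map; apply: sub_all ht => b /= b0; rewrite mulf_neq0.
by rewrite big_map; apply: eq_bigr => b _; rewrite ufM.
Qed.

Lemma Sunit (u : D) : u \is a GRing.unit -> S (u%:F).
Proof.
move=> uU; have -> : u%:F = uf (u^-1) by rewrite /uf (rmorphV tofrac uU) invrK.
by apply: Suf; rewrite invr_eq0; apply/eqP => u0; move: uU; rewrite u0 unitr0.
Qed.

Lemma SX x n : S x -> S (x ^+ n).
Proof. by move=> hx; elim: n => [|n IH]; [rewrite expr0; exact: S1 | rewrite exprS; apply: SM]. Qed.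

Lemma S_sum (s : seq D) : all (fun a => a != 0) s -> S (\sum_(a <- s) uf a).
Proof. by move=> h; exists s. Qed.

Definition Sb (x : K) : bool := if excluded_middle_informative (S x) then true else false.
Lemma SbP x : Sb x <-> S x.
Proof. by rewrite /Sb; case: excluded_middle_informative. Qed.

Lemma RD_S x : RD x <-> S x.
Proof.
split.
  move=> h; apply/SbP; apply: (h [pred y | Sb y]).
    split; first by apply/SbP; exact: S1.
      by move=> u v /SbP hu /SbP hv; apply/SbP; apply: SB.
    by move=> u v /SbP hu /SbP hv; apply/SbP; apply: SM.
  by move=> d d0; apply/SbP; apply: Suf.
move=> [s [hs ->]]; rewrite /RD => T; rewrite /GRing.subring_closed => -[T1 TB TM] Tuf.
have T0 : 0 \in T by rewrite -(subrr 1); apply: (TB).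
elim: s hs => [|a s IH] /=; first by rewrite big_nil.
move=> /andP[a0 hs]; rewrite big_cons.
have -> : uf a + \sum_(j <- s) uf j = uf a - (0 - \sum_(j <- s) uf j) by rewrite sub0r opprK.
by apply: (TB); [exact: Tuf | apply: (TB) => //; exact: IH].
Qed.

End Basics.
Section Euclid.
Variable D : idomainType.
Variable f : D -> int.
Hypothesis hf : euclidean_function f.

Lemma f1le a : a != 0 -> f 1 <= f a.
Proof. by move=> a0; have [+ _] := hf (oner_neq0 D) a0; rewrite mul1r. Qed.

Lemma unit_of (m q : D) : m * q = 1 -> m \is a GRing.unit.
Proof. by move=> h; apply/unitrP; exists q; rewrite mulrC h. Qed.

Lemma fltM a m : a != 0 -> m != 0 -> m \isn't a GRing.unit -> f a < f (a * m).
Proof.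
move=> a0 m0 mU.
have [_ [q [r [e hr]]]] := hf (mulf_neq0 a0 m0) a0.
have er : r = a * (1 - m * q) by rewrite mulrBr mulr1 {1}e mulrA addrC addKr.
case: (eqVneq r 0) => [r0|rn0].
  move: er; rewrite r0 => /esym/eqP; rewrite mulf_eq0 (negPf a0) /= subr_eq0 => /eqP h.
  by move: mU; rewrite (unit_of (esym h)).
have lt : f r < f (a * m) by case: hr => // r0; move: rn0; rewrite r0 eqxx.
apply: le_lt_trans lt; rewrite er.
have h1 : 1 - m * q != 0 by apply: contraNneq rn0 => h; rewrite er h mulr0.
by case: (hf a0 h1).
Qed.


Lemma fX m n : m != 0 -> m \isn't a GRing.unit -> f 1 + n%:Z <= f (m ^+ n).
Proof.
move=> m0 mU; elim: n => [|n IH]; first by rewrite expr0 addr0.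
have := fltM (expf_neq0 n m0) m0 mU; rewrite -exprSr => lt.
have -> : f 1 + n.+1%:Z = (f 1 + n%:Z) + 1 by rewrite -addrA -[n.+1]addn1 PoszD.
by rewrite lezD1; apply: le_lt_trans lt.
Qed.

Lemma GenA (P : D -> Prop) (m : D) :
  P 0 -> P 1 -> (forall x y, P x -> P y -> P (x - y)) ->
  (forall x y, P x -> P y -> P (x * y)) ->
  (forall b q, q != 0 -> P (b * q) -> P b) ->
  m != 0 -> m \isn't a GRing.unit -> P m -> forall b, P b.
Proof.
move=> P0 P1 PB PM Psat m0 mU Pm.
have PX n : P (m ^+ n) by elim: n => [|n IH]; rewrite ?expr0 // exprS; apply: PM.
suff H n : forall b, b != 0 -> f b < f 1 + n%:Z -> P b.
  move=> b; case: (eqVneq b 0) => [->//|b0].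
  by apply: (H `|f b - f 1|%N.+1) => //; have := f1le b0; lia.
elim: n => [|n IH] b b0 hb; first by have := f1le b0; lia.
set N := `|f b - f 1|%N.
have y0 : m ^+ N != 0 by apply: expf_neq0.
have [_ [q [r [e hr]]]] := hf b0 y0.
have Pr : P r.
  case: (eqVneq r 0) => [->//|rn0].
  case: hr => [r0|lt]; first by rewrite r0.
  by apply: IH => //; lia.
have Pbq : P (b * q).
  have -> : b * q = m ^+ N - r by rewrite e addrK.
  by apply: PB.
case: (eqVneq q 0) => [q0|qn0]; last by apply: (Psat b q).
move: e; rewrite q0 mulr0 add0r => e.
have fy := fX N m0 mU.
have b1 := f1le b0.
case: hr => [r0|lt]; first by move: y0; rewrite e r0 eqxx.
rewrite -e in lt.
have eN : (N%:Z) = f b - f 1 by rewrite /N abszE ger0_norm // subr_ge0.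
by have := le_lt_trans fy lt; rewrite eN addrC subrK ltxx.
Qed.

Lemma fmin (P : D -> Prop) : (exists b, b != 0 /\ P b) ->
  exists d, [/\ d != 0, P d & forall b, b != 0 -> P b -> f d <= f b].
Proof.
move=> [b [b0 Pb]].
suff H n : forall b, b != 0 -> P b -> f b < f 1 + n%:Z ->
  exists d, [/\ d != 0, P d & forall b, b != 0 -> P b -> f d <= f b].
  by apply: (H `|f b - f 1|%N.+1 b) => //; have := f1le b0; lia.
elim: n => [|n IH] {b b0 Pb} b b0 Pb hb; first by have := f1le b0; lia.
case: (classic (forall b', b' != 0 -> P b' -> f b <= f b')) => [h|].
  by exists b; split.
move=> /not_all_ex_not [b' H1].
have [b'0 H2] := imply_to_and _ _ H1.
have [Pb' nle] := imply_to_and _ _ H2.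
apply: (IH b') => //.
have : ~ (f b <= f b') by move=> h; apply: nle.
move=> h; have := f1le b'0; lia.
Qed.

End Euclid.


Lemma star_id (F : fieldType) (dl b q : F) n : b != 0 -> q != 0 ->
  dl * dl ^+ n / b = dl ^+ n / q * (1 - (b - dl * q) * b^-1).
Proof. by move=> b0 q0; field; rewrite b0 q0. Qed.

Section NC.
Variable D : idomainType.
Local Notation K := {fraction D}.
Variable f : D -> int.
Hypothesis hf : euclidean_function f.
Hypothesis nC : forall m : D, m != 0 -> S (m%:F) -> m \is a GRing.unit.
Variable d : D.
Hypothesis d0 : d != 0.
Hypothesis dU : d \isn't a GRing.unit.
Hypothesis dmin : forall b, b != 0 -> b \isn't a GRing.unit -> f d <= f b.

Lemma kd b : exists q c, b = d * q + c /\ (c \is a GRing.unit \/ c = 0).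
Proof.
case: (eqVneq b 0) => [->|b0]; first by exists 0, 0; split; [rewrite mulr0 addr0 | right].
have [_ [q [r [e hr]]]] := hf d0 b0.
exists q, r; split => //.
case: (eqVneq r 0) => [->|rn0]; first by right.
case: hr => [r0|lt]; first by right.
left; apply/negPn/negP => rU.
by have := dmin rn0 rU; rewrite leNgt lt.
Qed.

Local Notation dl := (d%:F).
Local Notation pi := (uf d).

Lemma dl0 : dl != 0. Proof. by rewrite tofrac_eq0. Qed.
Lemma dlpi : dl * pi = 1. Proof. by rewrite /uf mulfV // dl0. Qed.
Lemma Spi : S pi. Proof. exact: Suf. Qed.
Lemma SpiX n : S (pi ^+ n). Proof. exact/SX/Spi. Qed.

Lemma Smono x n k : S (x * pi ^+ n) -> S (x * pi ^+ (n + k)).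
Proof. by move=> h; rewrite exprD mulrA; apply: SM h (SpiX k). Qed.

Lemma Hall b : exists n, S (b%:F * pi ^+ n).
Proof.
pose P b := exists n, S (b%:F * pi ^+ n).
apply: (@GenA D f hf P d) => //.
- by exists 0%N; rewrite tofrac0 mul0r; exact: S0.
- by exists 0%N; rewrite tofrac1 mul1r expr0; exact: S1.
- move=> x y [n hn] [m hm]; exists (n + m)%N.
  rewrite tofracB mulrBl; apply: SB; first exact: Smono.
  by rewrite addnC; apply: Smono.
- move=> x y [n hn] [m hm]; exists (n + m)%N.
  by rewrite tofracM exprD mulrACA; apply: SM.
- move=> x q q0 [n hn]; exists n.
  have -> : x%:F * pi ^+ n = ((x * q)%:F * pi ^+ n) * uf q.
    by rewrite tofracM /uf (mulrAC x%:F) mulfK // tofrac_eq0.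
  by apply: SM => //; apply: Suf.
- by exists 1%N; rewrite expr1 dlpi; exact: S1.
Qed.

Lemma degP b : exists n, S (b%:F * pi ^+ n) /\ (n = 0%N \/ ~ S (b%:F * pi ^+ n.-1)).
Proof.
have [n hn] := Hall b.
elim: n hn => [|n IH] hn; first by exists 0%N; split => //; left.
case: (classic (S (b%:F * pi ^+ n))) => [h|h]; first exact: IH.
by exists n.+1; split => //; right.
Qed.

Lemma Scst (c : D) : c \is a GRing.unit \/ c = 0 -> S (c%:F).
Proof. by case=> [/Sunit//|->]; rewrite tofrac0; exact: S0. Qed.

Lemma star n : forall b, b != 0 -> S (b%:F * pi ^+ n) ->
  (n = 0%N \/ ~ S (b%:F * pi ^+ n.-1)) -> S (dl ^+ n / b%:F).
Proof.
elim: n => [|n IH] b b0 h1 h2.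
  by rewrite expr0 mul1r; apply: Suf.
have [q [c [e hc]]] := kd b.
have Sc := Scst hc.
case: h2 => [//|h2].
have q0 : q != 0.
  apply/eqP => q0; apply: h2; move: e; rewrite q0 mulr0 add0r => ->.
  by apply: SM => //; apply: SpiX.
have eb : b%:F = dl * q%:F + c%:F by rewrite e tofracD tofracM.
have h1' : S (q%:F * pi ^+ n).
  have -> : q%:F * pi ^+ n = b%:F * pi ^+ n.+1 - c%:F * pi ^+ n.+1.
    rewrite eb mulrDl addrK exprS mulrA (mulrC _ pi) mulrA (mulrC pi) dlpi mul1r //.
  by apply: SB => //; apply: SM => //; apply: SpiX.
have h2' : n = 0%N \/ ~ S (q%:F * pi ^+ n.-1).
  case: n {IH h1 h1'} h2 => [|n] h2; first by left.
  right => hq; apply: h2 => /=.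
  have -> : b%:F * pi ^+ n.+1 = c%:F * pi ^+ n.+1 + q%:F * pi ^+ n.
    rewrite eb mulrDl addrC; congr (_ + _).
    by rewrite exprS mulrA (mulrC _ pi) mulrA (mulrC pi) dlpi mul1r.
  by apply: SD => //; apply: SM => //; apply: SpiX.
have := IH q q0 h1' h2' => hI.
have -> : dl ^+ n.+1 / b%:F = (dl ^+ n / q%:F) * (1 - c%:F * uf b).
  have bF0 : b%:F != 0 by rewrite tofrac_eq0.
  have qF0 : q%:F != 0 by rewrite tofrac_eq0.
  have ec : c%:F = b%:F - dl * q%:F by rewrite eb addrC addKr.
  by rewrite ec /uf exprS; apply: star_id.
apply: SM => //; apply: SB; first exact: S1.
by apply: SM => //; apply: Suf.
Qed.

End NC.
Lemma id_vex (F : fieldType) (a b dl : F) (na nb : nat) : b != 0 -> dl != 0 ->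
  a / b * dl ^ (nb%:Z - na%:Z) = (a * dl^-1 ^+ na) / (b * dl^-1 ^+ nb).
Proof.
move=> b0 d0; rewrite expfzDr // -exprnN -exprnP !exprVn.
by field; rewrite b0 !expf_neq0.
Qed.

Lemma id_shift (F : fieldType) (dl : F) (j : int) (k : nat) : dl != 0 ->
  dl ^ j = dl ^ (j + k%:Z) * dl^-1 ^+ k.
Proof.
move=> d0; rewrite expfzDr // -exprnP exprVn mulfK //; exact: expf_neq0.
Qed.

Section V.
Variable D : idomainType.
Local Notation K := {fraction D}.
Variable f : D -> int.
Hypothesis hf : euclidean_function f.
Hypothesis nC : forall m : D, m != 0 -> S (m%:F) -> m \is a GRing.unit.
Variable d : D.
Hypothesis d0 : d != 0.
Hypothesis dU : d \isn't a GRing.unit.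
Hypothesis dmin : forall b, b != 0 -> b \isn't a GRing.unit -> f d <= f b.

Local Notation dl := (d%:F).
Local Notation pi := (uf d).

Definition Su (x : K) := [/\ x != 0, S x & S x^-1].

Lemma SuM x y : Su x -> Su y -> Su (x * y).
Proof.
move=> [x0 Sx Sx'] [y0 Sy Sy']; split; first by rewrite mulf_neq0.
  exact: SM.
by rewrite invfM; apply: SM.
Qed.

Lemma unitS b : b != 0 -> exists n, Su (b%:F * pi ^+ n).
Proof.
move=> b0; have [n [h1 h2]] := degP hf d0 dU b.
exists n; split => //.
  by rewrite mulf_neq0 ?expf_neq0 ?tofrac_eq0 // /uf invr_eq0 tofrac_eq0.
have := star hf d0 dmin b0 h1 h2.
by rewrite /uf exprVn invfM invrK mulrC.
Qed.

Lemma vex x : x != 0 -> exists j : int, Su (x * dl ^ j).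
Proof.
move=> x0; have [a [b [b0 ex]]] := fracE x.
have a0 : a != 0 by apply: contraNneq x0 => a0; rewrite ex a0 tofrac0 mul0r.
have [na ha] := unitS a0; have [nb hb] := unitS b0.
exists (nb%:Z - na%:Z); rewrite ex id_vex ?tofrac_eq0 //.
have [_ _ hb'] := hb.
apply: SuM => //; split => //; rewrite ?invr_eq0 ?invrK //; by case: hb.
Qed.

Lemma Sle z (l i : int) : S (z * dl ^ l) -> Su (z * dl ^ i) -> l <= i.
Proof.
move=> hl [h0 hi hi']; rewrite leNgt; apply/negP => lt.
have [k ek] : exists k : nat, l = i + k.+1%:Z.
  by exists (absz (l - i - 1)%R); lia.
have e : z * dl ^ l = (z * dl ^ i) * dl ^+ k.+1.
  by rewrite ek expfzDr ?tofrac_neq0 // -exprnP mulrA.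
have : S ((z * dl ^ i)^-1 * (z * dl ^ l)) by apply: SM.
rewrite e mulKf // -tofracXn => /nC.
rewrite expf_neq0 // unitrX_pos // => /(_ isT) dU'.
by move: dU; rewrite dU'.
Qed.

Lemma Smore z (i j : int) : Su (z * dl ^ i) -> j <= i -> S (z * dl ^ j).
Proof.
move=> [_ hi _] le.
have [k ek] : exists k : nat, i = j + k%:Z by exists (absz (i - j)%R); lia.
rewrite (id_shift j k (tofrac_neq0 d0)) -ek mulrA; apply: SM => //.
by rewrite -/(uf d); apply: SpiX.
Qed.

Definition v (x : K) : int :=
  if x == 0 then 0 else epsilon (inhabits 0) (fun j : int => Su (x * dl ^ j)).

Lemma vP x : x != 0 -> Su (x * dl ^ v x).
Proof.
move=> x0; rewrite /v (negPf x0).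
exact: (epsilon_spec (inhabits 0) (fun j : int => Su (x * dl ^ j)) (vex x0)).
Qed.

Lemma vU x j : Su (x * dl ^ j) -> v x = j.
Proof.
move=> h; have x0 : x != 0.
  by case: h => h _ _; apply: contraNneq h => ->; rewrite mul0r.
have hv := vP x0.
apply/eqP; rewrite eq_le; apply/andP; split.
  by have [_ hS _] := hv; exact: (Sle hS h).
by have [_ hS _] := h; exact: (Sle hS hv).
Qed.

Lemma dvr : is_DVR_in (@RD D).
Proof.
have dl0 : dl != 0 by rewrite tofrac_eq0.
exists v; split; first split.
- move=> x y x0 y0; apply: vU.
  by rewrite expfzDr // mulrACA; apply: SuM; apply: vP.
- move=> x y x0 y0 xy0.
  set m := Num.min (v x) (v y).
  have hx : S (x * dl ^ m) by apply: Smore (vP x0) _; rewrite ge_min lexx.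
  have hy : S (y * dl ^ m) by apply: Smore (vP y0) _; rewrite ge_min lexx orbT.
  apply: Sle (vP xy0).
  by rewrite mulrDl; apply: SD.
- move=> n; exists (dl ^ (- n)); first by rewrite expfz_neq0.
  apply: vU; rewrite -expfzDr // addNr expr0z; split; [exact: oner_neq0 | exact: S1 | rewrite invr1; exact: S1].
move=> x; rewrite RD_S; split.
  case: (eqVneq x 0) => [->|x0]; [by left | right].
  by apply: Sle (vP x0); rewrite expr0z mulr1.
case=> [->|]; first exact: S0.
case: (eqVneq x 0) => [->|x0 h]; first by move=> _; exact: S0.
by have := Smore (vP x0) h; rewrite expr0z mulr1.
Qed.
End V.

Section Cbranch.
Variable D : idomainType.
Local Notation K := {fraction D}.

Lemma allS (f : D -> int) (hf : euclidean_function f) (m : D) :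
  m != 0 -> m \isn't a GRing.unit -> S (m%:F) -> forall x : K, S x.
Proof.
move=> m0 mU Sm.
have H : forall b : D, S (b%:F).
  apply: (@GenA D f hf (fun b => S (b%:F)) m) => //.
  - by rewrite tofrac0; exact: S0.
  - by rewrite tofrac1; exact: S1.
  - by move=> x y hx hy; rewrite tofracB; apply: SB.
  - by move=> x y hx hy; rewrite tofracM; apply: SM.
  - move=> b q q0 h.
    have -> : b%:F = (b * q)%:F * uf q by rewrite tofracM /uf mulfK // tofrac_eq0.
    by apply: SM => //; apply: Suf.
move=> x; have [a [b [b0 ->]]] := fracE x.
by apply: SM => //; apply: Suf.
Qed.

Lemma fieldEgy : (forall b : D, b != 0 -> b \is a GRing.unit) -> egyptian D.
Proof.
move=> hU x x0; have [a [b [b0 ex]]] := fracE x.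
have a0 : a != 0 by apply: contraNneq x0 => a0; rewrite ex a0 tofrac0 mul0r.
exists [:: b * a^-1]; split => //; split.
  by rewrite /= andbT mulf_neq0 // invr_eq0.
rewrite big_seq1 ex tofracM (rmorphV tofrac (hU a a0)) invfM invrK mulrC //.
Qed.

Lemma two_char : (exists n, (0 < n)%N /\ n%:R == 0 :> D) ->
  2%:R == 0 :> D \/ 2%:R \is a @GRing.unit D.
Proof.
move=> [n [n0 hn]].
case: (eqVneq (2%:R : D) 0) => [->|t0]; first by left.
right.
elim: n {-2}n (leqnn n) n0 hn => [|N IH] n le n0 hn; first by move: le n0; rewrite leqn0 => /eqP ->.
case: (boolP (odd n)) => on.
  apply: (@unit_of D 2%:R (n./2.+1)%:R).
  rewrite -natrM (_ : (2 * n./2.+1 = n + 1)%N); last first.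
    by have := odd_double_half n; rewrite on -muln2 /=; lia.
  by rewrite natrD (eqP hn) add0r.
have en : n = (n./2).*2 by rewrite -{1}(odd_double_half n) (negPf on).
have k0 : (0 < n./2)%N by move: n0; rewrite {1}en double_gt0.
have hk : n./2%:R == 0 :> D.
  by move: hn; rewrite {1}en -muln2 natrM mulf_eq0 (negPf t0) orbF.
apply: (IH n./2) => //.
have en' : n = (n./2 * 2)%N by rewrite muln2 -en.
move: le k0 en'; lia.
Qed.

Lemma notuniq (T : eqType) (s : seq T) : ~~ uniq s -> exists a s', perm_eq s (a :: a :: s').
Proof.
elim: s => [//|x s IH] /=; rewrite negb_and negbK => /orP[xs|ns].
  by exists x, (rem x s); rewrite perm_cons perm_to_rem.
have [a [s' p]] := IH ns; exists a, (x :: s').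
rewrite (perm_trans (_ : perm_eq (x :: s) (x :: a :: a :: s'))) ?perm_cons //.
by rewrite -(cat1s x) -(cat1s a) perm_catCA /= perm_cons -(cat1s x) -(cat1s a) perm_catCA.
Qed.

Lemma merge : (2%:R == 0 :> D \/ 2%:R \is a @GRing.unit D) ->
  forall s : seq D, all (fun a => a != 0) s ->
  exists t, [/\ uniq t, all (fun a => a != 0) t & \sum_(a <- s) uf a = \sum_(a <- t) uf a].
Proof.
move=> h2 s.
elim: (size s) {-2}s (leqnn (size s)) => [|N IH] s' le hs.
  by exists s'; move: le; rewrite leqn0 size_eq0 => /eqP ->.
case: (boolP (uniq s')) => us; first by exists s'.
have [a [r p]] := notuniq us.
have := hs; rewrite (perm_all _ p) /= => /and3P[a0 _ hr].
have sz : (size r < N)%N by move: le; rewrite (perm_size p) /= !ltnS.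
have -> : \sum_(x <- s') uf x = (uf a + uf a) + \sum_(x <- r) uf x.
  by rewrite (perm_big _ p) /= !big_cons addrA.
have ha : uf a + uf a = (2%:R : D)%:F * uf a by rewrite rmorph_nat mulr2n mulrDl mul1r.
case: h2 => [/eqP z2|u2].
  rewrite ha z2 tofrac0 mul0r add0r.
  by apply: IH => //; apply: ltnW.
have a' : a * 2%:R^-1 != 0 by rewrite mulf_neq0 // invr_eq0; apply/eqP => e; move: u2; rewrite e unitr0.
have -> : uf a + uf a = uf (a * 2%:R^-1).
  by rewrite ha /uf tofracM (rmorphV tofrac u2) invfM invrK mulrC.
have [t [ut ht et]] := IH ((a * 2%:R^-1) :: r) sz (introT andP (conj a' hr)).
by exists t; split => //; rewrite -et big_cons.
Qed.

End Cbranch.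

Lemma fib_id (p q n r : nat) : (0 < p)%N -> (0 < q)%N -> q = (n * p + r)%N -> (r <= p)%N ->
  (p%:R / q%:R : rat) = (n.+1%:R)^-1 + (p - r)%:R / (q * n.+1)%:R.
Proof.
move=> p0 qp eq rp.
have q0 : q%:R != 0 :> rat by rewrite pnatr_eq0 -lt0n.
rewrite natrB // natrM.
rewrite eq natrD natrM in q0 *.
have n0 : n.+1%:R != 0 :> rat by rewrite pnatr_eq0.
rewrite -[n.+1]addn1 natrD in n0 *.
by field; rewrite q0 n0.
Qed.

Lemma fib p : forall q L, (0 < p)%N -> (0 < L)%N -> (p * L < q)%N ->
  exists s : seq nat, [/\ uniq s, all (fun n => L < n)%N s &
    (p%:R / q%:R : rat) = \sum_(n <- s) (n%:R)^-1].
Proof.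
elim: p {-2}p (leqnn p) => [|P IH] p le q L p0 L0 lt; first by move: p0; lia.
set n := (q %/ p)%N; set r := (q %% p)%N.
have eq : q = (n * p + r)%N by rewrite /n /r -divn_eq.
have rp : (r < p)%N by rewrite /r ltn_mod.
case: (eqVneq r 0%N) => [r0|r0].
  exists [:: n]; split => //=.
    rewrite andbT; move: lt; rewrite eq r0 addn0; nia.
  have n0 : (0 < n)%N by move: lt L0; rewrite eq r0 addn0; nia.
  rewrite big_seq1 eq r0 addn0 natrM; field.
  by rewrite !pnatr_eq0 -!lt0n n0 p0.
have lt' : ((p - r) * n.+1 < q * n.+1)%N.
  rewrite ltn_pmul2r //; move: lt L0; nia.
have [s [us ls es]] := IH (p - r)%N (ltac:(lia)) (q * n.+1)%N n.+1 (ltac:(lia)) isT lt'.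
exists (n.+1 :: s); split.
- rewrite /= us andbT; apply/negP => /(allP ls); rewrite ltnn //.
- have hL : (L < n.+1)%N by move: lt rp; rewrite eq; nia.
  rewrite /= hL /=; apply: sub_all ls => x /=; lia.
rewrite big_cons -es; apply: fib_id => //; [lia | exact: ltnW].
Qed.

Lemma block (a : nat) : (0 < a)%N -> 2^-1 <= \sum_(a <= k < a + a) (k%:R : rat)^-1.
Proof.
move=> a0.
have h : \sum_(a <= k < a + a) (((a + a)%N)%:R : rat)^-1 <= \sum_(a <= k < a + a) (k%:R : rat)^-1.
  rewrite big_nat_cond [X in _ <= X]big_nat_cond; apply: ler_sum => k /andP[/andP[ak ka] _].
  rewrite lef_pV2 ?posrE ?ltr0n //; [rewrite ler_nat; exact: ltnW | lia | lia].
apply: le_trans h; rewrite sumr_const_nat addnK natrD.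
have a0' : (a%:R : rat) != 0 by rewrite pnatr_eq0 -lt0n.
have -> : ((a%:R + a%:R : rat)^-1) *+ a = 2^-1.
  by rewrite -mulr_natr; field; rewrite -natrD pnatr_eq0; lia.
exact: lexx.
Qed.

Section Harm.
Variable N : nat.
Definition Hs (M : nat) : rat := \sum_(N.+1 <= k < M) (k%:R : rat)^-1.

Lemma Hbig : 1 <= Hs ((N.+1 + N.+1) + (N.+1 + N.+1)).
Proof.
rewrite /Hs (@big_cat_nat _ _ _ (N.+1 + N.+1)) /=; [|lia|lia].
have h1 := block (ltn0Sn N).
have h2 : 2^-1 <= \sum_(N.+1 + N.+1 <= k < (N.+1 + N.+1) + (N.+1 + N.+1)) (k%:R : rat)^-1.
  by apply: block; lia.
have -> : (1 : rat) = 2^-1 + 2^-1 by field.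
exact: lerD.
Qed.

Lemma Hfind j : 1 <= Hs (N.+1 + j) ->
  exists M, [/\ (N < M)%N, Hs M < 1 & 1 <= Hs M + (M%:R)^-1].
Proof.
elim: j => [|j IH].
  by rewrite addn0 /Hs big_geq // ler10.
case: (lerP 1 (Hs (N.+1 + j))) => [h _|h]; first exact: IH.
rewrite addnS => h'; exists (N.+1 + j)%N; split => //; first lia.
by move: h'; rewrite /Hs big_nat_recr //=; lia.
Qed.

Lemma ratSource : exists s : seq nat,
  [/\ uniq s, all (fun n => N < n)%N s & \sum_(n <- s) (n%:R : rat)^-1 = 1].
Proof.
have hb : 1 <= Hs (N.+1 + ((N.+1 + N.+1) + N.+1)).
  by rewrite (_ : (N.+1 + _)%N = ((N.+1 + N.+1) + (N.+1 + N.+1))%N); [exact: Hbig | lia].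
have [M [NM hM hM1]] := Hfind hb.
have M0 : (0 < M)%N by lia.
have Mr : (M%:R : rat) != 0 by rewrite pnatr_eq0 -lt0n.
have ui : uniq (index_iota N.+1 M) by rewrite /index_iota iota_uniq.
have ai : all (fun n => N < n)%N (index_iota N.+1 M).
  by apply/allP => x; rewrite mem_index_iota; lia.
set r := 1 - Hs M.
have r0 : 0 < r by rewrite /r subr_gt0.
have rM : r <= (M%:R)^-1 by rewrite /r; move: hM1; lra.
case: (eqVneq r (M%:R)^-1) => [er|nr].
  exists (index_iota N.+1 M.+1); split.
  - by rewrite /index_iota iota_uniq.
  - by apply/allP => x; rewrite mem_index_iota; lia.
  rewrite -/(Hs M.+1) /Hs big_nat_recr /=; last lia.
  by rewrite -/(Hs M) -er /r addrC subrK.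
have rlt : r < (M%:R)^-1 by rewrite lt_neqAle nr rM.
set p := `|numq r|%N; set q := `|denq r|%N.
have ep : (p%:R : rat) = (numq r)%:~R.
  by rewrite /p pmulrn gez0_abs // ltW // numq_gt0.
have eq : (q%:R : rat) = (denq r)%:~R.
  by rewrite /q pmulrn gez0_abs // ltW // denq_gt0.
have er : r = p%:R / q%:R by rewrite ep eq divq_num_den.
have p0 : (0 < p)%N by rewrite -(ltr_nat rat) ep ltr0z numq_gt0.
have q0 : (0 < q)%N by rewrite -(ltr_nat rat) eq ltr0z denq_gt0.
have pMq : (p * M < q)%N.
  rewrite -(ltr_nat rat) natrM.
  have qr : (0 : rat) < q%:R by rewrite ltr0n.
  move: rlt; rewrite er ltr_pdivrMr // => h.
  have Mp : (0 : rat) < M%:R by rewrite ltr0n.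
  by move: h; rewrite -(ltr_pM2r Mp) mulrAC mulVf // mul1r.
have [s2 [u2 a2 e2]] := fib p0 M0 pMq.
exists (index_iota N.+1 M ++ s2); split.
- rewrite cat_uniq ui u2 andbT /=; apply/hasPn => x /(allP a2) /= xM.
  by rewrite mem_index_iota (ltnNge x M) (ltnW xM) andbF.
- by rewrite all_cat ai /=; apply: sub_all a2 => x /= xM; apply: ltn_trans NM xM.
by rewrite big_cat /= -/(Hs M) -e2 -er /r addrC subrK.
Qed.
End Harm.

Section Transfer.
Variable F : fieldType.
Hypothesis char0 : forall n, (n.+1)%:R != 0 :> F.

Lemma nz_denF (x : rat) : (denq x)%:~R != 0 :> F.
Proof.
have := denq_gt0 x; case: (denq x) => [[|k]|k] //= _.
by rewrite -pmulrn; exact: char0.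
Qed.

Lemma ratrF_add x y : @ratr F (x + y) = @ratr F x + @ratr F y.
Proof.
have injZtoQ: @injective rat int intr by apply: intr_inj.
have nz_den := nz_denF.
apply: (canLR (mulfK (nz_den _))); apply: (mulIf (nz_den x)).
rewrite mulrAC mulrDl divfK ?nz_den // mulrAC -!rmorphM.
apply: (mulIf (nz_den y)); rewrite mulrAC mulrDl divfK ?nz_den //.
rewrite -!(rmorphM, rmorphD); congr _%:~R; apply: injZtoQ.
rewrite !(rmorphM, rmorphD) /= [_ + _]lock /= -lock !numqE.
by rewrite (mulrAC y) -!mulrDl -mulrA mulrAC !mulrA.
Qed.

Lemma ratrF_mul x y : @ratr F (x * y) = @ratr F x * @ratr F y.
Proof.
have injZtoQ: @injective rat int intr by apply: intr_inj.
have nz_den := nz_denF.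
rewrite /ratr mulrC mulrAC; apply: canLR (mulKf (nz_den _)) _; rewrite !mulrA.
do 2!apply: canRL (mulfK (nz_den _)) _; rewrite -!rmorphM; congr _%:~R.
apply: injZtoQ; rewrite !rmorphM [x * y]lock /= !numqE -lock.
by rewrite -!mulrA mulrA mulrCA -!mulrA (mulrCA y).
Qed.

Lemma transfer (s : seq nat) : all (fun n => 0 < n)%N s ->
  \sum_(n <- s) (n%:R : rat)^-1 = 1 -> \sum_(n <- s) (n%:R : F)^-1 = 1.
Proof.
move=> hs e.
have r1 : @ratr F 1 = 1 by exact: (@ratr_nat F 1%N).
have rinv n : (0 < n)%N -> @ratr F (n%:R)^-1 = (n%:R)^-1.
  move=> n0; have nF : (n%:R : F) != 0 by case: n n0 => // n _; exact: char0.
  have nQ : (n%:R : rat) != 0 by rewrite pnatr_eq0 -lt0n.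
  apply: (mulIf nF); rewrite mulVf // -(ratr_nat F n) -ratrF_mul mulVf //.
suff -> : \sum_(n <- s) (n%:R : F)^-1 = @ratr F (\sum_(n <- s) (n%:R : rat)^-1) by rewrite e r1.
elim: s hs {e} => [|n s IH] /=; first by rewrite !big_nil; symmetry; exact: (@ratr_nat F 0%N).
move=> /andP[n0 hs]; rewrite !big_cons ratrF_add rinv // IH //.
Qed.
End Transfer.

Section Egy.
Variable D : idomainType.
Local Notation K := {fraction D}.

Definition Egy (T : seq D) (x : K) := exists s : seq D,
  [/\ uniq s, all (fun a => a != 0) s, all (fun a => a \notin T) s & x = \sum_(a <- s) uf a].

Lemma EgyD x y : (forall T, Egy T x) -> (forall T, Egy T y) -> forall T, Egy T (x + y).
Proof.
move=> hx hy T.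
have [s [us ns ts es]] := hx T.
have [t [ut nt tt et]] := hy (T ++ s).
exists (s ++ t); split.
- rewrite cat_uniq us ut andbT /=; apply/hasPn => a /(allP tt) /=.
  by rewrite mem_cat negb_or => /andP[].
- by rewrite all_cat ns nt.
- rewrite all_cat ts /=; apply: sub_all tt => a /=.
  by rewrite mem_cat negb_or => /andP[].
by rewrite big_cat es et.
Qed.

Lemma preim (a : D) : a != 0 -> forall T : seq D, exists T' : seq D, forall w, a * w \in T -> w \in T'.
Proof.
move=> a0; elim=> [|t T [T' hT]]; first by exists [::].
case: (classic (exists w, a * w = t)) => [[w0 e]|ne].
  exists (w0 :: T') => w; rewrite inE => /orP[/eqP e'|h].
    by rewrite inE; apply/orP; left; apply/eqP; apply: (mulfI a0); rewrite e' e.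
  by rewrite inE hT ?orbT.
exists T' => w; rewrite inE => /orP[/eqP e|h]; last exact: hT.
by exfalso; apply: ne; exists w.
Qed.

Lemma EgyScale (a : D) : a != 0 -> (forall T, Egy T 1) -> forall T, Egy T (uf a).
Proof.
move=> a0 h1 T; have [T' hT] := preim a0 T.
have [w [uw nw tw ew]] := h1 T'.
exists (map ( *%R a) w); split.
- by rewrite map_inj_uniq //; exact: mulfI.
- by rewrite all_map; apply: sub_all nw => b /= b0; rewrite mulf_neq0.
- rewrite all_map; apply: sub_all tw => b /= bT; apply/negP => /hT.
  by rewrite (negPf bT).
by rewrite big_map; under eq_bigr do rewrite ufM; rewrite -mulr_sumr -ew mulr1.
Qed.

Lemma EgyS : (forall T, Egy T 1) -> forall x, S x -> forall T, Egy T x.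
Proof.
move=> h1 x [s [hs ->]].
elim: s hs => [|a s IH] /=.
  by move=> _ T; exists [::]; split; rewrite ?big_nil.
move=> /andP[a0 hs]; rewrite big_cons; apply: EgyD; last exact: IH.
exact: EgyScale.
Qed.

Hypothesis char0D : forall n, (n.+1)%:R != 0 :> D.

Lemma natD_inj : injective (fun n : nat => (n%:R : D)).
Proof.
have H m n : (m < n)%N -> (m%:R : D) != n%:R.
  move=> lt; have [k ->] : exists k, n = (m + k.+1)%N by exists (n - m.+1)%N; lia.
  rewrite natrD -{1}[m%:R]addr0 (inj_eq (addrI _)) eq_sym; exact: char0D.
move=> m n /= e; case: (ltngtP m n) => // lt.
  by move: (H _ _ lt); rewrite e eqxx.
by move: (H _ _ lt); rewrite e eqxx.
Qed.

Lemma natbound (T : seq D) : exists N, forall n, (N < n)%N -> (n%:R : D) \notin T.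
Proof.
elim: T => [|t T [N hN]]; first by exists 0%N.
case: (classic (exists n0, (n0%:R : D) = t)) => [[n0 e]|ne].
  exists (maxn N n0) => n; rewrite gtn_max => /andP[Nn n0n].
  rewrite inE negb_or hN // andbT; apply/eqP => e'.
  by move: n0n; rewrite (natD_inj (etrans e' (esym e))) ltnn.
exists N => n Nn; rewrite inE negb_or hN // andbT; apply/eqP => e.
by apply: ne; exists n.
Qed.

Lemma charSource : forall T, Egy T 1.
Proof.
move=> T; have [N hN] := natbound T.
have [s [us ass es]] := ratSource N.
exists (map (fun n : nat => (n%:R : D)) s); split.
- by rewrite map_inj_uniq //; exact: natD_inj.
- rewrite all_map; apply: sub_all ass => n /= Nn.
  by case: n Nn => // n _; exact: char0D.
- by rewrite all_map; apply: sub_all ass => n /= Nn; apply: hN.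
rewrite big_map; symmetry.
have c0 : forall n, (n.+1)%:R != 0 :> K by move=> n; rewrite -(rmorph_nat tofrac) tofrac_eq0.
rewrite -(transfer c0 (s := s)) //; last by apply: sub_all ass => n /=; lia.
by apply: eq_bigr => n _; rewrite /uf rmorph_nat.
Qed.

End Egy.

Lemma egyC (D : idomainType) (f : D -> int) (hf : euclidean_function f) (m : D) :
  m != 0 -> m \isn't a GRing.unit -> S (m%:F) -> egyptian D.
Proof.
move=> m0 mU Sm x x0.
have Sx := allS hf m0 mU Sm x.
case: (classic (2%:R == 0 :> D \/ 2%:R \is a @GRing.unit D)) => [h2|h2].
  have [s [hs es]] := Sx.
  have [t [ut nt et]] := merge h2 hs.
  by exists t; split => //; split => //; rewrite es et.
have c0 : forall n, (n.+1)%:R != 0 :> D.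
  move=> n; apply/negP => /eqP e; apply: h2; apply: two_char.
  by exists n.+1; rewrite e eqxx.
have [s [us ns _ es]] := EgyS (charSource c0) Sx [::].
by exists s.
Qed.

Unset Implicit Arguments.
Theorem theorem2p10 (D : idomainType) :
  is_euclidean D -> ~ egyptian D ->
  is_DVR_in (@RD D) /\ GRing.divring_closed (@units0 D).
Proof.
move=> [f hf] nE.
case: (classic (exists m : D, [/\ m != 0, m \isn't a GRing.unit & S (m%:F)])) => [[m [m0 mU Sm]]|nC'].
  by exfalso; apply: nE; exact: (egyC hf m0 mU Sm).
have nC : forall m : D, m != 0 -> S (m%:F) -> m \is a GRing.unit.
  move=> m m0 Sm; apply/negPn/negP => mU; apply: nC'; by exists m.
have [m [m0 mU]] : exists m : D, m != 0 /\ m \isn't a GRing.unit.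
  apply: NNPP => h; apply: nE; apply: fieldEgy => b b0.
  apply/negPn/negP => bU; apply: h; by exists b.
have [d [d0 dU dmin]] := fmin hf (P := fun b : D => b \isn't a GRing.unit) (ex_intro _ m (conj m0 mU)).
split; first exact: (dvr hf nC d0 dU dmin).
split.
- by rewrite unfold_in /units0 unitr1.
- move=> u v; rewrite !unfold_in /units0 => hu hv.
  have Su : S (u%:F) by apply: Scst; case/orP: hu => [h|/eqP ->]; [left; exact: h|right].
  have Sv : S (v%:F) by apply: Scst; case/orP: hv => [h|/eqP ->]; [left; exact: h|right].
  case: (eqVneq (u - v) 0) => [e|n0]; first by apply/orP; right; apply/eqP.
  by apply/orP; left; apply: nC => //; rewrite tofracB; apply: SB.
- move=> u v; rewrite !unfold_in /units0 => hu hv. 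
  case: (eqVneq v 0) => [->|v0]; first by apply/orP; right; rewrite invr0 mulr0.
  case: (eqVneq u 0) => [->|u0]; first by apply/orP; right; rewrite mul0r.
  have uU : u \is a GRing.unit by move: hu; rewrite (negPf u0) orbF.
  have vU : v \is a GRing.unit by move: hv; rewrite (negPf v0) orbF.
  apply/orP; left; change (u / v \is a GRing.unit).
  by rewrite unitrM uU unitrV vU.
Qed.
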